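(* Let $b$ be a Boolean expression, $C$ a HeyVL statement, $I$ an expectation, $\vec v$ a list of variables, and for an expectation $J$ let $\mathrm{Park}(b,C,J)$ be the HeyVL program $\mathtt{assert}\ J$ [labelled (1)]; $\mathtt{havoc}\ \vec v$; $\mathtt{validate}$; $\mathtt{assume}\ J$ [labelled (I)]; $\mathtt{if}\ b\ \{\ C;\ \mathtt{assert}\ J$ [labelled (2)]$;\ \mathtt{assume}\ ?(\mathsf{false})$ [labelled (II)] $\}\ \mathtt{else}\ \{\}$. Let $S=\mathrm{Park}(b,C,I)$, let $X,Y$ be expectations, and let $S'$ be obtained from $S$ by removing any subset of the assumptions (I) and (II), such that $\models\{X\}S'\{Y\}$. Then: (1) If $S'$ does not include (I), then $\models\{X\}\,\mathrm{Park}(b,C,\infty)\,\{Y\}$. (2) If $S'$ does not include (II), then $\models\{X\}\,\mathtt{if}\ b\ \{C\}\ \mathtt{else}\ \{\}\,\{Y\}$.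
   Context: Expectations are functions from program states to $[0,\infty]$, ordered pointwise by $\preceq$. $?(b)$ is the expectation equal to $\infty$ where $b$ holds and $0$ elsewhere. HeyVL statements and verification pre-expectation transformer $\mathrm{vp}$ (monotone in its argument): $x :\approx \sum_i p_i\cdot t_i$: $\sum_i p_i X[x/t_i]$; $\mathtt{reward}\ a$: $X+a$; $S_1;S_2$: $\mathrm{vp}[S_1](\mathrm{vp}[S_2](X))$; $\mathtt{if}(\sqcap)/\mathtt{if}(\sqcup)\{S_1\}\mathtt{else}\{S_2\}$: pointwise min/max of branch values; $\mathtt{assert}\ Y$: $\min(Y,X)$; $\mathtt{coassert}\ Y$: $\max(Y,X)$; $\mathtt{assume}\ Y$: $\infty$ where $Y\le X$, else $X$; $\mathtt{coassume}\ Y$: $0$ where $Y\ge X$, else $X$; $\mathtt{havoc}\ \vec v$/$\mathtt{cohavoc}\ \vec v$: pointwise inf/sup over values of $\vec v$; $\mathtt{validate}$: $\infty$ where $X=\infty$, else $0$; $\mathtt{covalidate}$: $0$ where $X=0$, else $\infty$. The conditional $\mathtt{if}\ b\{S_1\}\mathtt{else}\{S_2\}$ abbreviates $\mathtt{if}(\sqcap)\{\mathtt{assume}\ ?(b);S_1\}\mathtt{else}\{\mathtt{assume}\ ?(\neg b);S_2\}$. Removing a statement means replacing it by $\mathtt{skip}$, $\mathrm{vp}[\mathtt{skip}](X)=X$. Write $\models\{A\}S\{B\}$ iff $A\preceq\mathrm{vp}[S](B)$. *)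

(* Defs.v *)
From HB Require Import structures.
From mathcomp Require Import all_boot all_order all_algebra.
From mathcomp Require Import boolp classical_sets reals constructive_ereal ereal.
From Stdlib Require List.
Set Implicit Arguments. Unset Strict Implicit. Unset Printing Implicit Defensive.
Import Order.TTheory GRing.Theory Num.Theory.
Local Open Scope classical_set_scope.
Local Open Scope ring_scope.
Local Open Scope ereal_scope.

Section HeyVL.
Context (R : realType) (Var : eqType) (Val : Var -> Type).

Definition state := forall x : Var, Val x.
(* expectations: state -> [0, +oo]  (nonnegativity is imposed via [nonneg_exp]) *)
Definition exp := state -> \bar R.
Definition nonneg_exp (X : exp) := forall s, 0 <= X s.
Definition bexp := state -> bool.

(* ?(b) *)
Definition iver (b : bexp) : exp := fun s => if b s then +oo else 0.

Inductive stmt :=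
| Skip
| PAsgn (x : Var) (l : seq ((state -> R) * (state -> Val x)))  (* x :~ sum_i p_i . t_i *)
| Reward (a : exp)
| Seq (S1 S2 : stmt)
| IfDemon (S1 S2 : stmt)
| IfAngel (S1 S2 : stmt)
| Assert (Y : exp)
| Coassert (Y : exp)
| Assume (Y : exp)
| Coassume (Y : exp)
| Havoc (vs : seq Var)
| Cohavoc (vs : seq Var)
| Validate
| Covalidate.

Definition havoc_set (vs : seq Var) (s : state) : set state :=
  [set s' | forall y, y \notin vs -> s' y = s y].

Fixpoint vp (S : stmt) (X : exp) {struct S} : exp :=
  match S with
  | Skip => X
  | PAsgn x l => fun s =>
      \sum_(pt <- l) ((pt.1 s)%:E * X (@dfwith Var Val s x (pt.2 s)))
  | Reward a => fun s => X s + a s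
  | Seq S1 S2 => vp S1 (vp S2 X)
  | IfDemon S1 S2 => fun s => Order.min (vp S1 X s) (vp S2 X s)
  | IfAngel S1 S2 => fun s => Order.max (vp S1 X s) (vp S2 X s)
  | Assert Y => fun s => Order.min (Y s) (X s)
  | Coassert Y => fun s => Order.max (Y s) (X s)
  | Assume Y => fun s => if Y s <= X s then +oo else X s
  | Coassume Y => fun s => if X s <= Y s then 0 else X s
  | Havoc vs => fun s => ereal_inf [set X s' | s' in havoc_set vs s]
  | Cohavoc vs => fun s => ereal_sup [set X s' | s' in havoc_set vs s]
  | Validate => fun s => if X s == +oo then +oo else 0
  | Covalidate => fun s => if X s == 0 then 0 else +oo
  end.

Fixpoint wf (S : stmt) : Prop :=
  match S with
  | Skip | Havoc _ | Cohavoc _ | Validate | Covalidate => True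
  | PAsgn x l => forall s, (forall pt, List.In pt l -> (0 <= pt.1 s)%R)
                           /\ (\sum_(pt <- l) pt.1 s)%R = 1%R
  | Reward a | Assert a | Coassert a | Assume a | Coassume a => nonneg_exp a
  | Seq S1 S2 | IfDemon S1 S2 | IfAngel S1 S2 => wf S1 /\ wf S2
  end.

Definition valid (X : exp) (S : stmt) (Y : exp) := forall s, X s <= vp S Y s.

Definition If (b : bexp) (S1 S2 : stmt) : stmt :=
  IfDemon (Seq (Assume (iver b)) S1) (Seq (Assume (iver (fun s => ~~ b s))) S2).

(* Park(b,C,J) where assumption (I) is kept iff kI, (II) kept iff kII;
   a removed statement is replaced by skip. *)
Definition ParkOpt (kI kII : bool) (vs : seq Var) (b : bexp) (C : stmt) (J : exp) : stmt :=
  Seq (Assert J)                                   (* (1) *)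
  (Seq (Havoc vs)
  (Seq Validate
  (Seq (if kI then Assume J else Skip)             (* (I) *)
       (If b (Seq C (Seq (Assert J)                (* (2) *)
                         (if kII then Assume (iver (fun _ => false)) else Skip)))  (* (II) *)
             Skip)))).

Definition Park (vs : seq Var) (b : bexp) (C : stmt) (J : exp) : stmt :=
  ParkOpt true true vs b C J.

Definition infty_exp : exp := fun _ => +oo.

End HeyVL.

(* Main.v *)
Require Import Defs.
From HB Require Import structures.
From mathcomp Require Import all_boot all_order all_algebra.
From mathcomp Require Import boolp classical_sets reals constructive_ereal ereal.
Import Order.TTheory GRing.Theory Num.Theory.
Local Open Scope ereal_scope.

Section L.
Context (R : realType) (Var : eqType) (Val : Var -> Type).
Implicit Types (S : stmt R Val) (X : exp R Val).

Lemma hs_self (vs : seq Var) (s : state Val) : havoc_set vs s s.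
Proof. by []. Qed.

Lemma vp_nonneg S X : wf S -> nonneg_exp X -> nonneg_exp (vp S X).
Proof.
elim: S X => [|x l|a|S1 IH1 S2 IH2|S1 IH1 S2 IH2|S1 IH1 S2 IH2|Y|Y|Y|Y|vs|vs||] X /= wS hX s.
- exact: hX.
- have {}wS : forall pt, List.In pt l -> (0 <= pt.1 s)%R by move=> pt; case: (wS s) => h _; exact: h.
  elim: l wS => [|pt l IHl] wS; first by rewrite big_nil.
  rewrite big_cons; apply: adde_ge0; last by apply: IHl => pt' h; apply: wS; right.
  apply: mule_ge0; last exact: hX.
  by rewrite lee_fin; apply: wS; left.
- by apply: adde_ge0; [exact: hX | exact: wS].
- by case: wS => w1 w2; apply: IH1 => //; apply: IH2.
- case: wS => w1 w2; rewrite le_min; apply/andP; split; [exact: IH1|exact: IH2].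
- case: wS => w1 w2; rewrite le_max; apply/orP; left; exact: IH1.
- by rewrite le_min wS hX.
- by rewrite le_max hX orbT.
- by case: ifP.
- by case: ifP.
- by apply/ereal_infP => y [s' _ <-]; apply: hX.
- by apply: le_ereal_sup_tmp; exists (X s) => //; exists s.
- by case: ifP.
- by case: ifP.
Qed.

Lemma vp_mono S X X' : wf S -> nonneg_exp X -> (forall s, X s <= X' s) ->
  forall s, vp S X s <= vp S X' s.
Proof.
elim: S X X' => [|x l|a|S1 IH1 S2 IH2|S1 IH1 S2 IH2|S1 IH1 S2 IH2|Y|Y|Y|Y|vs|vs||] X X' /= wS hX hle s.
- exact: hle.
- have {}wS : forall pt, List.In pt l -> (0 <= pt.1 s)%R by move=> pt; case: (wS s) => h _; exact: h.
  elim: l wS => [|pt l IHl] wS; first by rewrite !big_nil.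
  rewrite !big_cons; apply: leeD; last by apply: IHl => pt' h; apply: wS; right.
  apply: lee_wpmul2l; last exact: hle.
  by rewrite lee_fin; apply: wS; left.
- by apply: leeD.
- case: wS => w1 w2; apply: IH1 => //; first exact: vp_nonneg.
  by apply: IH2.
- case: wS => w1 w2; rewrite le_min !ge_min (IH1 X X') // (IH2 X X') //.
  by rewrite orbT.
- case: wS => w1 w2; rewrite ge_max !le_max (IH1 X X') // (IH2 X X') //.
  by rewrite orbT.
- by rewrite le_min !ge_min lexx hle !orbT.
- by rewrite ge_max !le_max lexx hle !orbT.
- case: ifP => h1; case: ifP => h2 //; last exact: leey.
  by move: h2; rewrite (le_trans h1 (hle s)).
- case: ifP => h1; case: ifP => h2 //.
  + exact: le_trans (hX s) (hle s).
  + by move: h1; rewrite (le_trans (hle s) h2).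
- apply/ereal_infP => y [s' hs' <-]; apply: ge_ereal_inf.
  by exists (X s'); [exists s' | exact: hle].
- apply/ereal_supP => y [s' hs' <-]; apply: le_ereal_sup_tmp.
  by exists (X' s'); [exists s' | exact: hle].
- case: ifP => /eqP h1; case: ifP => /eqP h2 //.
  by move: (hle s); rewrite h1 leye_eq => /eqP.
- case: ifP => /eqP h1; case: ifP => /eqP h2 //.
  by case: h1; apply/eqP; rewrite eq_le hX andbT -h2 hle.
Qed.


Lemma assume_mono (c z z' : \bar R) : z <= z' ->
  (if c <= z then +oo else z) <= (if c <= z' then +oo else z').
Proof.
move=> h; case: ifP => h1; case: ifP => h2 //; last exact: leey.
by move: h2; rewrite (le_trans h1 h).
Qed.

Lemma assume_ge (c z : \bar R) : z <= (if c <= z then +oo else z).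
Proof. by case: ifP => // _; exact: leey. Qed.

Lemma If_le (b : bexp Val) (T T' : stmt R Val) (Y : exp R Val) :
  (forall s, vp T Y s <= vp T' Y s) ->
  forall s, vp (If b T (@Skip R Var Val)) Y s <= vp (If b T' (@Skip R Var Val)) Y s.
Proof.
move=> h s /=; rewrite le_min !ge_min lexx orbT andbT.
by rewrite assume_mono.
Qed.

Lemma outer_le (vs : seq Var) (J J' : exp R Val) (W W' : stmt R Val) (Z Z' : exp R Val) :
  (forall s, J s <= J' s) -> (forall s, vp W Z s <= vp W' Z' s) ->
  forall s, vp (Seq (Assert J) (Seq (@Havoc R Var Val vs) (Seq (@Validate R Var Val) W))) Z s <=
            vp (Seq (Assert J') (Seq (@Havoc R Var Val vs) (Seq (@Validate R Var Val) W'))) Z' s.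
Proof.
move=> hJ hW s /=; rewrite le_min !ge_min hJ /=.
apply/orP; right.
apply/ereal_infP => y [s' hs' <-]; apply: ge_ereal_inf.
exists (if vp W Z s' == +oo then +oo else 0%R); first by exists s'.
case: ifP => /eqP h1; case: ifP => /eqP h2 //.
by move: (hW s'); rewrite h1 leye_eq => /eqP.
Qed.

Lemma outer_inv (vs : seq Var) (J : exp R Val) (W : stmt R Val) (Z : exp R Val) x s :
  0 < x -> x <= vp (Seq (Assert J) (Seq (@Havoc R Var Val vs) (Seq (@Validate R Var Val) W))) Z s ->
  x <= J s /\ vp W Z s = +oo.
Proof.
move=> x0 /=; rewrite le_min => /andP[h1 h2]; split => //.
move: h2; set S0 := ereal_inf _ => h2.
have : S0 <= (if vp W Z s == +oo then +oo else 0%R).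
  by apply: ge_ereal_inf; exists (if vp W Z s == +oo then +oo else 0%R) => //; exists s.
case: ifP => [/eqP //|_] h3.
by have := lt_le_trans x0 (le_trans h2 h3); rewrite ltxx.
Qed.

Lemma assume_inv (J : exp R Val) (U : stmt R Val) (Z : exp R Val) s :
  vp (Seq (Assume J) U) Z s = +oo -> J s <= vp U Z s.
Proof. by move=> /=; case: ifP => // h1 h; rewrite h leey in h1. Qed.

End L.

Theorem theorem7 (R : realType) (Var : eqType) (Val : Var -> Type)
  (b : bexp Val) (C : stmt R Val) (I : exp R Val) (vs : seq Var)
  (X Y : exp R Val) (kI kII : bool) :
  wf C -> nonneg_exp I -> nonneg_exp X -> nonneg_exp Y ->
  valid X (ParkOpt kI kII vs b C I) Y ->
  (~~ kI -> valid X (Park vs b C (@infty_exp R Var Val)) Y) /\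
  (~~ kII -> valid X (If b C (@Skip R Var Val)) Y).
Proof.
move=> wC hI hX hY H; split.
- move=> /negbTE kI0; move: H; rewrite kI0 => H s.
  apply: le_trans (H s) _; apply: outer_le => [s'|s'].
    exact: leey.
  refine (le_trans (@If_le _ _ _ b (Seq C (Seq (Assert I) (if kII then Assume (@iver R Var Val (fun _ => false)) else @Skip R Var Val))) (Seq C (Seq (Assert (@infty_exp R Var Val)) (Assume (@iver R Var Val (fun _ => false))))) Y _ s') _).
  + move=> s2 /=.
    refine (@vp_mono R Var Val C _ _ wC _ _ s2).
    * move=> s3; rewrite le_min hI /=; case: (kII) => /=; last exact: hY.
      by case: ifP.
    * move=> s3; rewrite /infty_exp /iver /= (hY s3) /=.
      by rewrite ge_min leey.
  + exact: assume_ge.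
- move=> /negbTE kII0; move: H; rewrite kII0 => H s.
  have wIf : wf (If b C (@Skip R Var Val)).
    by rewrite /=; split; split => // s3; rewrite /iver; case: ifP.
  have [X0|Xp] := eqVneq (X s) 0%R.
    by rewrite X0; apply: (@vp_nonneg R Var Val _ _ wIf hY).
  have {}Xp : 0 < X s by rewrite lt_def Xp hX.
  have [h1 h2] := @outer_inv R Var Val vs I _ Y (X s) s Xp (H s).
  have h3 : I s <= vp (If b (Seq C (Seq (Assert I) (@Skip R Var Val))) (@Skip R Var Val)) Y s.
    move: h2; case: (kI) => h2; first exact: (@assume_inv R Var Val _ _ _ _ h2).
    by rewrite [X in _ <= X](_ : _ = +oo) ?leey.
  apply: le_trans h1 (le_trans h3 _).
  apply: (@If_le R Var Val b) => s2 /=.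
  refine (@vp_mono R Var Val C _ _ wC _ _ s2).
    by move=> s3; rewrite le_min hI hY.
  by move=> s3; rewrite ge_min lexx orbT.
Qed.
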